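(* Let $q$ be a power of the prime $p$ and $n$ a positive integer. Let $h\in\mathbb{F}_q[x]$ with $\gcd\left(h(x),\frac{x^n-1}{x-1}\right)=1$, and let $m$ be a positive integer with $m<q-1$ and $\gcd(m,q-1)=1$. Then: (i) if $m=1$, then for every $\alpha,\theta_0,\ldots,\theta_{q-1}\in\mathbb{F}_{q^n}$ with $\mathrm{Tr}_{q^n/q}(\alpha)\neq -h(1)$, the polynomial $$P(x)=L_h(x)+\alpha\cdot\mathrm{Tr}_{q^n/q}(x)+\sum_{i=0}^{q-1}(\theta_i^q-\theta_i)\cdot\mathrm{Tr}_{q^n/q}(x)^i$$ is a permutation polynomial of $\mathbb{F}_{q^n}$; in particular, if $p\nmid n$, one may take $\alpha$ to be any element of $\mathbb{F}_q\setminus\{-\frac{h(1)}{n}\}$; (ii) if $m>1$, then for every $\alpha,\beta,\theta_0,\ldots,\theta_{q-1}\in\mathbb{F}_{q^n}$ with $\mathrm{Tr}_{q^n/q}(\alpha)=-h(1)$ and $\mathrm{Tr}_{q^n/q}(\beta)\neq 0$, the polynomial $$P(x)=L_h(x)+\alpha\cdot\mathrm{Tr}_{q^n/q}(x)+\beta\cdot\mathrm{Tr}_{q^n/q}(x)^m+\sum_{i=0}^{q-1}(\theta_i^q-\theta_i)\cdot\mathrm{Tr}_{q^n/q}(x)^i$$ is a permutation polynomial of $\mathbb{F}_{q^n}$; in particular, if $p\nmid n$, one may take $\alpha=-\frac{h(1)}{n}$ and $\beta$ any nonzero element of $\mathbb{F}_q$.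
   Context: For $u(x)=\sum_{i=0}^m a_i x^i\in\mathbb{F}_q[x]$, its linearized $q$-associate is $L_u(x)=\sum_{i=0}^m a_i x^{q^i}$. $\mathrm{Tr}_{q^n/q}(x)=x+x^q+\cdots+x^{q^{n-1}}$. A permutation polynomial of a finite field is a polynomial inducing a bijection of it. *)

(* Defs.v *)
From HB Require Import structures.
From mathcomp Require Import all_boot all_order all_algebra all_field.
Set Implicit Arguments. Unset Strict Implicit. Unset Printing Implicit Defensive.
Import GRing.Theory.
Local Open Scope ring_scope.

(* Setting: L is the finite field F_{q^n}; F_q is its subfield {x | x^q = x}. *)

Definition inFq (L : finFieldType) (q : nat) (x : L) : bool := x ^+ q == x.

Definition polyFq (L : finFieldType) (q : nat) (h : {poly L}) : Prop :=
  forall i : nat, inFq q h`_i.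

Definition linq (L : finFieldType) (q : nat) (h : {poly L}) (x : L) : L :=
  \sum_(i < size h) h`_i * x ^+ (q ^ i).

Definition trq (L : finFieldType) (q n : nat) (x : L) : L :=
  \sum_(i < n) x ^+ (q ^ i).

Definition is_perm_fun (L : finFieldType) (f : L -> L) : Prop := bijective f.

(* Main.v *)
Require Import Defs.
From HB Require Import structures.
From mathcomp Require Import all_boot all_order all_algebra all_field.
From mathcomp Require Import zify.
Import GRing.Theory.
Local Open Scope ring_scope.
Set Implicit Arguments. Unset Strict Implicit.

Lemma frobD (L : finFieldType) (N : nat) (hN : [pchar L].-nat N) (x y : L) :
  (x + y) ^+ N = x ^+ N + y ^+ N.
Proof. exact: exprDn_pchar. Qed.

Lemma frob0 (L : finFieldType) (N : nat) (hN : [pchar L].-nat N) :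
  (0 : L) ^+ N = 0.
Proof. by rewrite expr0n; case: N hN. Qed.

Lemma frobN (L : finFieldType) (N : nat) (hN : [pchar L].-nat N) (x : L) :
  (- x) ^+ N = - x ^+ N.
Proof. by apply/eqP; rewrite -subr_eq0 opprK -frobD // addNr frob0. Qed.

Lemma frobB (L : finFieldType) (N : nat) (hN : [pchar L].-nat N) (x y : L) :
  (x - y) ^+ N = x ^+ N - y ^+ N.
Proof. by rewrite frobD // frobN. Qed.

Lemma frob_sum (L : finFieldType) (N : nat) (hN : [pchar L].-nat N) (I : Type)
  (r : seq I) (P : pred I) (F : I -> L) :
  (\sum_(i <- r | P i) F i) ^+ N = \sum_(i <- r | P i) F i ^+ N.
Proof. by apply: (big_morph (fun x : L => x ^+ N)); [exact: frobD | exact: frob0]. Qed.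

Lemma pnat_pow (L : finFieldType) (q j : nat) (hq : [pchar L].-nat q) :
  [pchar L].-nat (q ^ j)%N.
Proof. by rewrite pnatX hq. Qed.

Lemma inFq_pow (L : finFieldType) (q j : nat) (x : L) :
  inFq q x -> x ^+ (q ^ j) = x.
Proof.
move/eqP=> hx; elim: j => [|j IH]; first by rewrite expn0 expr1.
by rewrite expnSr exprM IH hx.
Qed.

Lemma trq_Fq (L : finFieldType) (q n : nat) (hq : [pchar L].-nat q)
  (hL : #|L| = (q ^ n)%N) (hn : (0 < n)%N) (x : L) : inFq q (trq q n x).
Proof.
apply/eqP; rewrite /trq frob_sum //.
under eq_bigr do rewrite -exprM -expnSr.
case: n hL hn => // n hL _.
rewrite big_ord_recr big_ord_recl /= -hL expf_card expn0 expr1 addrC.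
by apply: congr1; apply: eq_bigr => i _.
Qed.

Lemma trqD (L : finFieldType) (q n : nat) (hq : [pchar L].-nat q) (x y : L) :
  trq q n (x + y) = trq q n x + trq q n y.
Proof. by rewrite /trq -big_split; apply: eq_bigr => i _; rewrite frobD ?pnat_pow. Qed.

Lemma trq0 (L : finFieldType) (q n : nat) (hq : [pchar L].-nat q) :
  trq q n (0 : L) = 0.
Proof. by rewrite /trq big1 // => i _; rewrite frob0 ?pnat_pow. Qed.

Lemma trqN (L : finFieldType) (q n : nat) (hq : [pchar L].-nat q) (x : L) :
  trq q n (- x) = - trq q n x.
Proof. by rewrite /trq -sumrN; apply: eq_bigr => i _; rewrite frobN ?pnat_pow. Qed.

Lemma trqB (L : finFieldType) (q n : nat) (hq : [pchar L].-nat q) (x y : L) :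
  trq q n (x - y) = trq q n x - trq q n y.
Proof. by rewrite trqD // trqN. Qed.

Lemma trq_sum (L : finFieldType) (q n : nat) (hq : [pchar L].-nat q) (I : Type)
  (r : seq I) (P : pred I) (F : I -> L) :
  trq q n (\sum_(i <- r | P i) F i) = \sum_(i <- r | P i) trq q n (F i).
Proof. by apply: (big_morph (trq q n)); [exact: trqD | exact: trq0]. Qed.

Lemma trq_scalel (L : finFieldType) (q n : nat) (c x : L) :
  inFq q c -> trq q n (c * x) = c * trq q n x.
Proof.
move=> hc; rewrite /trq mulr_sumr; apply: eq_bigr => i _.
by rewrite exprMn (inFq_pow i hc).
Qed.

Lemma trq_scaler (L : finFieldType) (q n : nat) (c w : L) :
  inFq q w -> trq q n (c * w) = trq q n c * w.
Proof.
move=> hw; rewrite /trq mulr_suml; apply: eq_bigr => i _.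
by rewrite exprMn (inFq_pow i hw).
Qed.

Lemma trq_frob (L : finFieldType) (q n : nat) (hq : [pchar L].-nat q)
  (hL : #|L| = (q ^ n)%N) (hn : (0 < n)%N) (x : L) :
  trq q n (x ^+ q) = trq q n x.
Proof.
have /eqP <- := trq_Fq hq hL hn x.
rewrite {2}/trq frob_sum //; apply: eq_bigr => i _; by rewrite exprAC.
Qed.

Lemma trq_frobn (L : finFieldType) (q n : nat) (hq : [pchar L].-nat q)
  (hL : #|L| = (q ^ n)%N) (hn : (0 < n)%N) (x : L) (j : nat) :
  trq q n (x ^+ (q ^ j)) = trq q n x.
Proof.
elim: j => [|j IH]; first by rewrite expn0 expr1.
by rewrite expnSr exprM trq_frob.
Qed.
Lemma trq_linq (L : finFieldType) (q n : nat) (hq : [pchar L].-nat q)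
  (hL : #|L| = (q ^ n)%N) (hn : (0 < n)%N) (h : {poly L}) (hF : polyFq q h) (x : L) :
  trq q n (linq q h x) = h.[1] * trq q n x.
Proof.
rewrite /linq trq_sum // horner_coef mulr_suml; apply: eq_bigr => i _.
by rewrite trq_scalel // trq_frobn // expr1n mulr1.
Qed.

Lemma linqB (L : finFieldType) (q : nat) (hq : [pchar L].-nat q) (h : {poly L}) (x y : L) :
  linq q h (x - y) = linq q h x - linq q h y.
Proof.
rewrite /linq -sumrB; apply: eq_bigr => i _.
by rewrite frobB ?pnat_pow // mulrBr.
Qed.

Definition Ez (L : finFieldType) (q : nat) (z : L) (f : {poly L}) : L :=
  \sum_(i < size f) f`_i * z ^+ (q ^ i).

Lemma Ez_widen (L : finFieldType) (q : nat) (z : L) (f : {poly L}) (N : nat) :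
  (size f <= N)%N -> Ez q z f = \sum_(i < N) f`_i * z ^+ (q ^ i).
Proof.
move=> hN; rewrite /Ez (big_ord_widen _ (fun i => f`_i * z ^+ (q ^ i)) hN).
rewrite big_mkcond /=; apply: eq_bigr => i _.
by case: ltnP => // hi; rewrite nth_default // mul0r.
Qed.

Lemma EzD (L : finFieldType) (q : nat) (z : L) (f g : {poly L}) :
  Ez q z (f + g) = Ez q z f + Ez q z g.
Proof.
set N := maxn (size f) (size g).
rewrite (@Ez_widen _ _ _ (f + g) N); last by rewrite (leq_trans (size_polyD _ _)).
rewrite (@Ez_widen _ _ _ f N) ?leq_maxl // (@Ez_widen _ _ _ g N) ?leq_maxr //.
by rewrite -big_split; apply: eq_bigr => i _; rewrite coefD mulrDl.
Qed.

Lemma EzC (L : finFieldType) (q : nat) (z c : L) (g : {poly L}) :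
  Ez q z (c%:P * g) = c * Ez q z g.
Proof.
rewrite (@Ez_widen _ _ _ _ (size g)); last by rewrite mul_polyC size_scale_leq.
by rewrite /Ez mulr_sumr; apply: eq_bigr => i _; rewrite coefCM mulrA.
Qed.

Lemma EzX (L : finFieldType) (q : nat) (hq : [pchar L].-nat q) (z : L) (g : {poly L})
  (hg : polyFq q g) : Ez q z ('X * g) = (Ez q z g) ^+ q.
Proof.
rewrite (@Ez_widen _ _ _ _ (size g).+1); last first.
  by apply: leq_trans (size_polyMleq _ _) _; rewrite size_polyX.
rewrite big_ord_recl /= coefXM eqxx mul0r add0r /Ez frob_sum //.
apply: eq_bigr => i _; rewrite coefXM /= exprMn.
by move: (hg i) => /eqP ->; rewrite -exprM -expnSr.
Qed.

Lemma polyFqX (L : finFieldType) (q : nat) (g : {poly L}) :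
  (0 < q)%N -> polyFq q g -> polyFq q ('X * g).
Proof.
move=> q0 hg i; rewrite coefXM; case: (i == 0)%N => //.
by rewrite /inFq expr0n gtn_eqF.
Qed.

Lemma Ez_mul0 (L : finFieldType) (q : nat) (hq : [pchar L].-nat q) (z : L) (u : {poly L}) :
  forall g, polyFq q g -> Ez q z g = 0 -> Ez q z (u * g) = 0.
Proof.
have q0 : (0 < q)%N by case/andP: hq.
elim/poly_ind: u => [|u c IH] g hg hE; first by rewrite mul0r /Ez size_poly0 big_ord0.
rewrite mulrDl -mulrA EzD EzC hE mulr0 addr0 IH //.
  exact: polyFqX q0 hg.
by rewrite EzX // hE frob0.
Qed.
Lemma Phi_eq (L : finFieldType) (n : nat) :
  (('X^n - 1) %/ ('X - 1)) = \poly_(i < n) (1 : L).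
Proof.
have hX : ('X - 1 : {poly L}) != 0 by rewrite -size_poly_eq0 -polyC1 size_XsubC.
rewrite subrX1 mulKp // poly_def; apply: eq_bigr => i _; by rewrite scale1r.
Qed.

Lemma kernel_lemma (L : finFieldType) (q n : nat) (hq : [pchar L].-nat q)
  (h : {poly L}) (hF : polyFq q h)
  (hgcd : coprimep h (('X^n - 1) %/ ('X - 1))) (z : L) :
  trq q n z = 0 -> linq q h z = 0 -> z = 0.
Proof.
have q0 : (0 < q)%N by case/andP: hq.
move=> hT hLz; move: hgcd; rewrite Phi_eq => /Bezout_coprimepP [[u v] /= huv].
set Phi := \poly_(i < n) (1 : L) in huv.
have PhiF : polyFq q Phi.
  by move=> i; rewrite /inFq coef_poly; case: ltnP => _; rewrite ?expr1n ?expr0n ?gtn_eqF.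
have EPhi : Ez q z Phi = 0.
  rewrite (@Ez_widen _ _ _ _ n) ?size_poly // -[RHS]hT /trq; apply: eq_bigr => i _.
  by rewrite coef_poly ltn_ord mul1r.
have Eh : Ez q z h = 0 by [].
have Ew : Ez q z (u * h + v * Phi) = 0 by rewrite EzD !Ez_mul0 ?addr0.
have /size_poly1P [c c0 hc] : size (u * h + v * Phi) == 1%N.
  by rewrite (eqp_size huv) size_poly1.
move: Ew; rewrite hc -[c%:P]mulr1 EzC.
rewrite /Ez size_poly1 big_ord1 coefC /= expn0 expr1 mul1r.
by move/eqP; rewrite mulf_eq0 (negPf c0) /= => /eqP.
Qed.
Lemma perm_crit (L : finFieldType) (q n : nat) (hq : [pchar L].-nat q)
  (h : {poly L}) (hF : polyFq q h)
  (hgcd : coprimep h (('X^n - 1) %/ ('X - 1))) (F : L -> L)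
  (H : forall x y, trq q n (linq q h x + F (trq q n x)) =
                   trq q n (linq q h y + F (trq q n y)) -> trq q n x = trq q n y) :
  is_perm_fun (fun x => linq q h x + F (trq q n x)).
Proof.
apply: injF_bij => x y /= Hxy.
have Txy := H x y (congr1 _ Hxy).
move: Hxy; rewrite Txy => /addIr /eqP; rewrite -subr_eq0 -linqB // => /eqP hl.
apply/eqP; rewrite -subr_eq0; apply/eqP; apply: (kernel_lemma hq hF hgcd) hl.
by rewrite trqB // Txy subrr.
Qed.

Lemma root_inj (L : finFieldType) (q m : nat) (hq1 : (1 < q)%N) (hm0 : (0 < m)%N)
  (hcop : coprime m (q - 1)) (t t' : L) :
  inFq q t -> inFq q t' -> t ^+ m = t' ^+ m -> t = t'.
Proof.
have pw : forall s : L, inFq q s -> forall j, s ^+ (j * (q - 1) + 1) = s.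
  move=> s /eqP hs; elim=> [|j IH]; first by rewrite mul0n add0n expr1.
  have -> : (j.+1 * (q - 1) + 1 = j * (q - 1) + q)%N.
    by rewrite mulSn; lia.
  by rewrite exprD hs -[in RHS]IH exprD expr1.
move=> ht ht' e.
case: (egcdnP (q - 1) hm0) => km kn hkm _.
move: hcop; rewrite /coprime => /eqP hg; rewrite hg in hkm.
by rewrite -(pw t ht kn) -(pw t' ht' kn) -hkm mulnC !exprM e.
Qed.

Lemma inFqD (L : finFieldType) (q : nat) (hq : [pchar L].-nat q) (x y : L) :
  inFq q x -> inFq q y -> inFq q (x + y).
Proof. by move=> /eqP hx /eqP hy; rewrite /inFq frobD // hx hy. Qed.

Lemma inFqN (L : finFieldType) (q : nat) (hq : [pchar L].-nat q) (x : L) :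
  inFq q x -> inFq q (- x).
Proof. by move=> /eqP hx; rewrite /inFq frobN // hx. Qed.

Lemma inFqM (L : finFieldType) (q : nat) (x y : L) :
  inFq q x -> inFq q y -> inFq q (x * y).
Proof. by move=> /eqP hx /eqP hy; rewrite /inFq exprMn hx hy. Qed.

Lemma inFqV (L : finFieldType) (q : nat) (x : L) :
  inFq q x -> inFq q (x^-1).
Proof. by move=> /eqP hx; rewrite /inFq exprVn hx. Qed.

Lemma inFqX (L : finFieldType) (q : nat) (x : L) (i : nat) :
  inFq q x -> inFq q (x ^+ i).
Proof. by move=> /eqP hx; rewrite /inFq exprAC hx. Qed.

Lemma inFq_nat (L : finFieldType) (q : nat) (hq : [pchar L].-nat q) (j : nat) :
  inFq q (j%:R : L).
Proof.
elim: j => [|j IH]; first by rewrite /inFq frob0.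
by rewrite -addn1 natrD; apply: inFqD => //; rewrite /inFq expr1n.
Qed.

Lemma inFq_h1 (L : finFieldType) (q : nat) (hq : [pchar L].-nat q) (h : {poly L}) :
  polyFq q h -> inFq q h.[1].
Proof.
move=> hF; rewrite horner_coef /inFq frob_sum //; apply/eqP; apply: eq_bigr => i _.
by rewrite expr1n mulr1; apply/eqP; apply: hF.
Qed.

Lemma trq_nat (L : finFieldType) (q n : nat) (x : L) :
  inFq q x -> trq q n x = n%:R * x.
Proof.
move=> hx; rewrite /trq (eq_bigr (fun _ => x)) => [|i _]; last by rewrite inFq_pow.
by rewrite sumr_const card_ord mulr_natl.
Qed.

Lemma trq_theta (L : finFieldType) (q n : nat) (hq : [pchar L].-nat q)
  (hL : #|L| = (q ^ n)%N) (hn : (0 < n)%N) (theta : 'I_q -> L) (t : L) :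
  inFq q t -> trq q n (\sum_(i < q) (theta i ^+ q - theta i) * t ^+ i) = 0.
Proof.
move=> ht; rewrite trq_sum // big1 // => i _.
by rewrite trq_scaler ?inFqX // trqB // trq_frob // subrr mul0r.
Qed.
Unset Implicit Arguments. Set Strict Implicit.
Theorem corollary3p8 (L : finFieldType) (p k q n : nat)
  (hp : prime p) (hk : (0 < k)%N) (hq : q = (p ^ k)%N) (hn : (0 < n)%N)
  (hL : #|L| = (q ^ n)%N)
  (h : {poly L}) (hFq : polyFq q h)
  (hgcd : coprimep h (('X^n - 1) %/ ('X - 1)))
  (m : nat) (hm0 : (0 < m)%N) (hmq : (m < q - 1)%N) (hcop : coprime m (q - 1)) :
  (m = 1%N ->
     (forall (alpha : L) (theta : 'I_q -> L),
        trq q n alpha != - h.[1] ->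
        is_perm_fun (fun x : L => linq q h x + alpha * trq q n x
           + \sum_(i < q) (theta i ^+ q - theta i) * trq q n x ^+ i))
     /\
     (~~ (p %| n)%N ->
      forall (alpha : L) (theta : 'I_q -> L),
        inFq q alpha -> alpha != - h.[1] / n%:R ->
        is_perm_fun (fun x : L => linq q h x + alpha * trq q n x
           + \sum_(i < q) (theta i ^+ q - theta i) * trq q n x ^+ i)))
  /\
  ((1 < m)%N ->
     (forall (alpha beta : L) (theta : 'I_q -> L),
        trq q n alpha = - h.[1] -> trq q n beta != 0 ->
        is_perm_fun (fun x : L => linq q h x + alpha * trq q n x
           + beta * trq q n x ^+ m
           + \sum_(i < q) (theta i ^+ q - theta i) * trq q n x ^+ i))
     /\
     (~~ (p %| n)%N ->
      forall (beta : L) (theta : 'I_q -> L),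
        inFq q beta -> beta != 0 ->
        is_perm_fun (fun x : L => linq q h x + (- h.[1] / n%:R) * trq q n x
           + beta * trq q n x ^+ m
           + \sum_(i < q) (theta i ^+ q - theta i) * trq q n x ^+ i))).
Proof.
have pc : p \in [pchar L].
  by apply: (@card_finPcharP L p (k * n)%N _ hp); rewrite hL hq expnM.
have hqn : [pchar L].-nat q by rewrite hq pnatX (eq_pnat _ (pcharf_eq pc)) pnat_id.
have hq1 : (1 < q)%N by lia.
have hgood : forall x, inFq q (trq q n x) := trq_Fq hqn hL hn.
have hn0 : ~~ (p %| n)%N -> (n%:R : L) != 0 by rewrite (dvdn_pcharf pc).
have partA : forall (alpha : L) (theta : 'I_q -> L),
        trq q n alpha != - h.[1] ->
        is_perm_fun (fun x : L => linq q h x + alpha * trq q n x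
           + \sum_(i < q) (theta i ^+ q - theta i) * trq q n x ^+ i).
  move=> alpha theta ha.
  pose F := fun t => alpha * t + \sum_(i < q) (theta i ^+ q - theta i) * t ^+ i.
  apply: (@eq_bij _ _ (fun x => linq q h x + F (trq q n x))); last first.
    by move=> x /=; rewrite /F addrA.
  apply: (@perm_crit L q n hqn h hFq hgcd F) => x y; rewrite /F.
  rewrite !trqD // !trq_linq // !trq_scaler // !trq_theta // !addr0 -!mulrDl.
  apply: mulfI; by rewrite addrC addr_eq0.
have partB : forall (alpha beta : L) (theta : 'I_q -> L),
        trq q n alpha = - h.[1] -> trq q n beta != 0 ->
        is_perm_fun (fun x : L => linq q h x + alpha * trq q n x
           + beta * trq q n x ^+ m
           + \sum_(i < q) (theta i ^+ q - theta i) * trq q n x ^+ i).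
  move=> alpha beta theta ha hb.
  pose F := fun t => alpha * t + beta * t ^+ m
           + \sum_(i < q) (theta i ^+ q - theta i) * t ^+ i.
  apply: (@eq_bij _ _ (fun x => linq q h x + F (trq q n x))); last first.
    by move=> x /=; rewrite /F !addrA.
  apply: (@perm_crit L q n hqn h hFq hgcd F) => x y; rewrite /F.
  rewrite !trqD // !trq_linq // !trq_scaler ?inFqX // !trq_theta // !addr0 !addrA -!mulrDl.
  rewrite ha addrN !mul0r !add0r => /(mulfI hb).
  exact: (root_inj hq1 hm0 hcop (hgood x) (hgood y)).
split=> [_|hm1]; split=> // hpn.
- move=> alpha theta ha hne; apply: partA; rewrite trq_nat //.
  apply: contra hne => /eqP E; apply/eqP; rewrite -E mulrAC divff ?mul1r //; exact: hn0.
- move=> beta theta hb hb0; apply: partB.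
    have hF1 : inFq q (- h.[1] / n%:R).
      apply: inFqM; first by apply: inFqN => //; apply: inFq_h1.
      exact/inFqV/inFq_nat.
    by rewrite (trq_nat _ hF1) mulrC divfK //; exact: hn0.
  by rewrite trq_nat // mulf_neq0 ?hn0.
Qed.
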